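(* Let $L,n$ be positive integers. As maps on $\mathcal M(L,n)$, the operators $e_i^\star$ ($1\le i\le L-1$) satisfy: (i) $(e_i^\star)^2=e_i^\star$; (ii) $e_i^\star e_j^\star=e_j^\star e_i^\star$ whenever $|i-j|\ge2$; (iii) $e_i^\star e_{i+1}^\star e_i^\star=e_{i+1}^\star e_i^\star e_{i+1}^\star$ for $1\le i\le L-2$.
   Context: $\mathcal M(L,n)$ is the set of tuples $B=(B_1,\dots,B_L)$ of subsets of $[n]$, drawn as an $L\times n$ grid with rows $1..L$ bottom to top, columns $1..n$ left to right, a ball in cell $(r,j)$ iff $j\in B_r$. The column word $\mathrm{cw}(B)$ scans columns left to right, each column top to bottom, recording row numbers of balls. For a word $w$ and $i\ge1$, $\mathrm{Par}_i(w)$ is obtained by reading $w$ left to right, writing ''('' for each letter $i+1$ and '')'' for each letter $i$, and iteratively matching a ''('' with a '')'' to its right whenever they are adjacent or only matched parentheses lie between them; letters whose parentheses remain unmatched are unmatched. The operator $e_i^\star$ moves every ball of row $i+1$ whose letter $i+1$ in $\mathrm{cw}(B)$ is unmatched in $\mathrm{Par}_i(\mathrm{cw}(B))$ down to the (necessarily empty) cell of row $i$ in the same column. Products of operators denote composition acting right to left. *)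

(* Defs.v *)
From mathcomp Require Import all_boot.
Set Implicit Arguments. Unset Strict Implicit. Unset Printing Implicit Defensive.

(* M(L,n): tuples (B_1,...,B_L) of subsets of [n].  Row r (1-based) is stored
   at index r-1 : 'I_L; column j (1-based) is the ordinal j-1 : 'I_n. *)
Definition ballConf (L n : nat) := {ffun 'I_L -> {set 'I_n}}.

(* B_r for a 1-based row number r (empty set if r is out of range). *)
Definition rowset L n (B : ballConf L n) (r : nat) : {set 'I_n} :=
  match r with
  | 0 => set0
  | r'.+1 => match insub r' with Some o => B o | None => set0 end
  end.

(* Column word, each letter tagged by the column it comes from:
   columns left to right, each column top (row L) to bottom (row 1). *)
Definition cw_tagged L n (B : ballConf L n) : seq ('I_n * nat) :=
  flatten [seq [seq (j, r) | r <- rev (iota 1 L) & j \in rowset B r]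
          | j <- enum 'I_n].

Definition cw L n (B : ballConf L n) : seq nat := map snd (cw_tagged B).

(* Par_i: the parenthesis sequence, tagged by column; true = "(" (letter i+1),
   false = ")" (letter i). *)
Definition par_seq L n (i : nat) (B : ballConf L n) : seq ('I_n * bool) :=
  [seq (p.1, p.2 == i.+1) | p <- cw_tagged B & (p.2 == i.+1) || (p.2 == i)].

Fixpoint match_step (T : Type) (s : seq (T * bool)) : seq (T * bool) :=
  match s with
  | x :: ((y :: t) as s') => if x.2 && ~~ y.2 then t else x :: match_step s'
  | _ => s
  end.

(* Iterate matching until no more matches are possible (size s steps suffice,
   since each effective step removes two parentheses). *)
Definition unmatched (T : Type) (s : seq (T * bool)) : seq (T * bool) :=
  iter (size s) (@match_step T) s.

Definition moved_cols L n (i : nat) (B : ballConf L n) : {set 'I_n} :=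
  [set j | (j, true) \in unmatched (par_seq i B)].

Definition estar L n (i : nat) (B : ballConf L n) : ballConf L n :=
  [ffun k : 'I_L =>
     if (k : nat).+1 == i then B k :|: moved_cols i B
     else if (k : nat).+1 == i.+1 then B k :\: moved_cols i B
     else B k].

(* Main.v *)
Require Import Defs.
From mathcomp Require Import all_boot zify.
Set Implicit Arguments. Unset Strict Implicit. Unset Printing Implicit Defensive.

Section Match.
Variable T : eqType.
Implicit Types s t : seq (T * bool).

Fixpoint redb s : bool :=
  match s with
  | x :: ((y :: _) as s') => ~~ (x.2 && ~~ y.2) && redb s'
  | _ => true
  end.

Fixpoint um s : nat * seq T :=
  match s with
  | [::] => (0, [::])
  | x :: s' => if x.2 then (if (um s').1 is c.+1 then (c, (um s').2)
                            else (0, x.1 :: (um s').2))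
               else ((um s').1.+1, (um s').2)
  end.

Lemma ms2 x y t : match_step (x :: y :: t) =
  if x.2 && ~~ y.2 then t else x :: match_step (y :: t).
Proof. by []. Qed.
Lemma red2 x y t : redb (x :: y :: t) = ~~ (x.2 && ~~ y.2) && redb (y :: t).
Proof. by []. Qed.

Lemma ms_red s : redb s -> match_step s = s.
Proof.
elim: s => [|x s IH] //; case: s IH => [|y t] IH //.
rewrite ms2 red2 => /andP[/negbTE -> H].
by rewrite IH.
Qed.

Lemma ms_size s : ~~ redb s -> size (match_step s) + 2 = size s.
Proof.
elim: s => [|x s IH] //; case: s IH => [|y t] IH //.
rewrite ms2 red2; case: ifP => [_ _|H] /=; first by rewrite addn2.
move/IH; rewrite /=; lia.
Qed.

Lemma um_ms s : um (match_step s) = um s.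
Proof.
elim: s => [|x s IH] //; case: s IH => [|y t] IH //.
rewrite ms2; case: ifP => [/andP[xt /negbTE yf]|_].
  rewrite /= xt yf /=. by case: (um t).
by rewrite [LHS]/= IH.
Qed.

Lemma red_count x s : redb (x :: s) -> x.2 -> count (fun y => ~~ y.2) s = 0.
Proof.
elim: s x => [|y t IH] x //= /andP[H1 H2] xt.
move: H1; rewrite xt /= negbK => yt.
by rewrite yt /= (IH y).
Qed.

Lemma um_red s : redb s ->
  um s = (count (fun y => ~~ y.2) s, [seq x.1 | x <- s & x.2]).
Proof.
elim: s => [|x s IH] //= Hr.
have Hs : redb s by case: s Hr IH => //= y t /andP[].
rewrite IH //=.
case: ifP => xt /=.
  by rewrite (red_count Hr xt).
by [].
Qed.

Lemma iter_ms k s : (size (iter k (@match_step T) s) + k.*2 <= size s)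
                    || redb (iter k (@match_step T) s).
Proof.
elim: k => [|k IH] /=; first by rewrite addn0 leqnn.
set t := iter k _ s in IH *.
case: (boolP (redb t)) => Ht.
  by rewrite ms_red // Ht orbT.
have := ms_size Ht; move: IH; rewrite (negbTE Ht) orbF => H1 H2.
apply/orP; left; rewrite doubleS; lia.
Qed.

Lemma unmatched_red s : redb (unmatched s).
Proof.
rewrite /unmatched; have := iter_ms (size s) s.
case/orP => // H.
case: s H => [|x s] //= H; exfalso; move: H; rewrite -!addnn; lia.
Qed.

Lemma um_unmatched s : um (unmatched s) = um s.
Proof.
rewrite /unmatched; elim: (size s) => //= k IH; by rewrite um_ms.
Qed.

Lemma mem_true j s : ((j, true) \in s) = (j \in [seq x.1 | x <- s & x.2]).
Proof.
elim: s => [|[a b] s IH] //=.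
rewrite in_cons IH; case: b => //=.
by rewrite in_cons xpair_eqE andbT.
by rewrite xpair_eqE andbF.
Qed.

Lemma mem_unmatched j s : ((j, true) \in unmatched s) = (j \in (um s).2).
Proof.
by rewrite mem_true -um_unmatched (um_red (unmatched_red s)).
Qed.
End Match.

Section Cols.
Variable n : nat.
Implicit Types P Q : {set 'I_n}.
Implicit Types s : seq 'I_n.

Definition piece P Q (j : 'I_n) : seq ('I_n * bool) :=
  (if j \in P then [:: (j, true)] else [::]) ++
  (if j \in Q then [:: (j, false)] else [::]).
Definition pseq P Q s := flatten [seq piece P Q j | j <- s].

Fixpoint cnt P Q s : nat :=
  if s is j :: s' then cnt P Q s' + (j \in Q) - (j \in P) else 0.
Fixpoint mvs P Q s : seq 'I_n :=
  if s is j :: s' then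
    (if [&& j \in P, j \notin Q & cnt P Q s' == 0] then j :: mvs P Q s'
     else mvs P Q s')
  else [::].

Lemma um_pseq P Q s : um (pseq P Q s) = (cnt P Q s, mvs P Q s).
Proof.
elim: s => [|j s IH] //=.
rewrite /pseq /= -/(pseq P Q s) /piece.
case: (j \in P); case: (j \in Q) => /=; rewrite IH /=.
- by rewrite addn1 subn1.
- by case: (cnt P Q s) => [|c] /=; rewrite ?subn1 ?addn0.
- by rewrite addn1 subn0.
- by rewrite addn0 subn0.
Qed.

Lemma mvs_sub P Q s j : j \in mvs P Q s -> j \in s.
Proof.
elim: s => [|k s IH] //=; case: ifP => _; rewrite ?in_cons.
  by case/orP => [->|/IH ->] //; rewrite orbT.
by move/IH ->; rewrite orbT.
Qed.

Definition mvS P Q : {set 'I_n} := [set j | j \in mvs P Q (enum 'I_n)].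

Lemma mv_unm P Q : [set j | (j, true) \in unmatched (pseq P Q (enum 'I_n))] = mvS P Q.
Proof.
by apply/setP => j; rewrite !inE mem_unmatched um_pseq.
Qed.
End Cols.

Lemma filter_none (T : eqType) (s : seq T) (p : pred T) :
  (forall x, x \in s -> ~~ p x) -> filter p s = [::].
Proof.
elim: s => [|x s IH] //= H.
rewrite (negbTE (H x (mem_head _ _))) IH // => y ys; apply: H; by rewrite in_cons ys orbT.
Qed.

Lemma par_seqE L n i (B : ballConf L n) : 1 <= i -> i < L ->
  par_seq i B = pseq (rowset B i.+1) (rowset B i) (enum 'I_n).
Proof.
move=> i1 iL.
rewrite /par_seq /cw_tagged filter_flatten map_flatten -!map_comp /pseq.
congr flatten; rewrite enumT; apply: eq_map => j /=.
rewrite filter_map -filter_predI map_comp -map_comp.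
have -> : iota 1 L = iota 1 i.-1 ++ [:: i; i.+1] ++ iota i.+2 (L - i.+1).
  rewrite -[L in iota 1 L](_ : i.-1 + (2 + (L - i.+1)) = L); last by lia.
  rewrite iotaD iotaD /=; congr (_ ++ _ :: _ :: _); try lia.
  congr iota; lia.
rewrite !rev_cat !filter_cat.
rewrite filter_none; last first.
  move=> x; rewrite mem_rev mem_iota /= => H.
  apply/negP => /andP[/= /orP[] /eqP E _]; lia.
rewrite (filter_none (s := rev (iota 1 i.-1))); last first.
  move=> x; rewrite mem_rev mem_iota /= => H.
  apply/negP => /andP[/= /orP[] /eqP E _]; lia.
rewrite /= cats0 eqxx /= (_ : (i == i.+1) = false); last by lia.
rewrite /piece /= eqxx /= -[match insub i with Some o => B o | None => set0 end]/(rowset B i.+1).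
case: (j \in rowset B i.+1); case: (j \in rowset B i) => //=; rewrite ?eqxx //.
all: rewrite (_ : (i == i.+1) = false) //; lia.
Qed.

Lemma moved_colsE L n i (B : ballConf L n) : 1 <= i -> i < L ->
  moved_cols i B = mvS (rowset B i.+1) (rowset B i).
Proof. by move=> *; rewrite /moved_cols par_seqE // mv_unm. Qed.

Lemma rowset_estar L n i (B : ballConf L n) r : 1 <= i -> i < L ->
  rowset (estar i B) r =
    if r == i then rowset B r :|: moved_cols i B
    else if r == i.+1 then rowset B r :\: moved_cols i B
    else rowset B r.
Proof.
move=> i1 iL; case: r => [|r] /=.
  by rewrite (_ : (0 == i) = false) //; lia.
case: insubP => [o _ ov|].
  rewrite /estar ffunE ov. by [].
move=> H; rewrite (_ : (r.+1 == i) = false); last by lia.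
by rewrite (_ : (r.+1 == i.+1) = false); last by lia.
Qed.

Lemma conf_eq L n (B B' : ballConf L n) :
  (forall r, rowset B r = rowset B' r) -> B = B'.
Proof.
move=> H; apply/ffunP => k; have := H (val k).+1; by rewrite /= valK.
Qed.

Definition st := (bool * bool * bool)%type.
Fixpoint c1 (w : seq st) : nat :=
  if w is (x, y, z) :: w' then c1 w' + x - y else 0.
Fixpoint c2 (w : seq st) : nat :=
  if w is (x, y, z) :: w' then c2 w' + y - z else 0.
Fixpoint F1 (w : seq st) : seq st :=
  if w is (x, y, z) :: w' then
    (if [&& y, ~~ x & c1 w' == 0] then (true, false, z) else (x, y, z)) :: F1 w'
  else [::].
Fixpoint F2 (w : seq st) : seq st :=
  if w is (x, y, z) :: w' then
    (if [&& z, ~~ y & c2 w' == 0] then (x, true, false) else (x, y, z)) :: F2 w'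
  else [::].

Lemma F11_aux w : c1 w <= c1 (F1 w) /\ F1 (F1 w) = F1 w.
Proof.
elim: w => [|[[x y] z] w [IH1 IH2]] //=.
case: x; case: y; case: z => /=; rewrite ?IH2;
  case: (c1 w =P 0) => H /=; rewrite ?IH2; try (case: (c1 (F1 w) =P 0) => H' /=);
  split; try lia; try done; exfalso; lia.
Qed.

Lemma F11 w : F1 (F1 w) = F1 w.
Proof. by case: (F11_aux w). Qed.

Lemma braid_aux w :
  let a := c1 w in let b := c2 (F1 w) in let c := c1 (F2 (F1 w)) in
  let d := c2 w in let e := c1 (F2 w) in let f := c2 (F1 (F2 w)) in
  [/\ e = minn a c, d + e = b + c, f + e = a + b &
      F1 (F2 (F1 w)) = F2 (F1 (F2 w))].
Proof.
elim: w => [|[[x y] z] w [IH1 IH2 IH3 IH4]] //=.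
move: IH1 IH2 IH3 IH4.
set a := c1 w; set b := c2 (F1 w); set c := c1 (F2 (F1 w)).
set d := c2 w; set e := c1 (F2 w); set f := c2 (F1 (F2 w)).
move=> IH1 IH2 IH3 IH4.
case: x; case: y; case: z;
  case: (a =P 0) => Ha; case: (d =P 0) => Hd /=;
  rewrite -/a -/b -/c -/d -/e -/f;
  try (case: (b =P 0) => Hb /=); try (case: (e =P 0) => He /=);
  rewrite -/a -/b -/c -/d -/e -/f;
  try (case: (c =P 0) => Hc /=); try (case: (f =P 0) => Hf /=);
  rewrite ?IH4; split; try lia; try done.
Qed.

Section Col.
Variable n : nat.
Implicit Types X Y Z : {set 'I_n}.
Definition col X Y Z (s : seq 'I_n) : seq st :=
  [seq (j \in X, j \in Y, j \in Z) | j <- s].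

Lemma cnt_c1 X Y Z s : cnt Y X s = c1 (col X Y Z s).
Proof. by elim: s => [|j s IH] //=; rewrite IH. Qed.
Lemma cnt_c2 X Y Z s : cnt Z Y s = c2 (col X Y Z s).
Proof. by elim: s => [|j s IH] //=; rewrite IH. Qed.

Lemma col_T1 X Y Z s : uniq s ->
  col (X :|: [set j | j \in mvs Y X s]) (Y :\: [set j | j \in mvs Y X s]) Z s
  = F1 (col X Y Z s).
Proof.
elim: s => [|j s IH] //= /andP[js us].
rewrite -IH // -(cnt_c1 X Y Z).
have jm : j \notin mvs Y X s by apply/negP => /mvs_sub; apply/negP.
congr cons.
  rewrite !inE; case: ifP => H.
    move/and3P: H => [-> /negbTE -> _]; by rewrite mem_head.
  rewrite (negbTE jm).
  by case: (j \in X) H; case: (j \in Y) => //= ->.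
rewrite /col; apply/eq_in_map => k ks /=.
have kj : (k == j) = false by apply/negbTE; apply: contra js => /eqP <-.
by rewrite !inE; case: ifP => _; rewrite ?in_cons ?kj.
Qed.

Lemma col_T2 X Y Z s : uniq s ->
  col X (Y :|: [set j | j \in mvs Z Y s]) (Z :\: [set j | j \in mvs Z Y s]) s
  = F2 (col X Y Z s).
Proof.
elim: s => [|j s IH] //= /andP[js us].
rewrite -IH // -(cnt_c2 X Y Z).
have jm : j \notin mvs Z Y s by apply/negP => /mvs_sub; apply/negP.
congr cons.
  rewrite !inE; case: ifP => H.
    move/and3P: H => [-> /negbTE -> _]; by rewrite mem_head.
  rewrite (negbTE jm).
  by case: (j \in Y) H; case: (j \in Z) => //= ->.
rewrite /col; apply/eq_in_map => k ks /=.
have kj : (k == j) = false by apply/negbTE; apply: contra js => /eqP <-.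
by rewrite !inE; case: ifP => _; rewrite ?in_cons ?kj.
Qed.

Lemma col_inj X Y Z X' Y' Z' :
  col X Y Z (enum 'I_n) = col X' Y' Z' (enum 'I_n) -> [/\ X = X', Y = Y' & Z = Z'].
Proof.
move=> H.
have K : forall s, col X Y Z s = col X' Y' Z' s -> forall j, j \in s ->
   [/\ (j \in X) = (j \in X'), (j \in Y) = (j \in Y') & (j \in Z) = (j \in Z')].
  elim=> [|k s IH] //= [E1 E2 E3 E4] j; rewrite in_cons.
  by case/orP => [/eqP -> | /(IH E4)].
split; apply/setP => j; by case: (K _ H j (mem_enum _ j)).
Qed.
End Col.

Section Main.
Variables L n : nat.
Implicit Types B : ballConf L n.

Lemma est_lo i B : 1 <= i -> i < L ->
  rowset (estar i B) i = rowset B i :|: mvS (rowset B i.+1) (rowset B i).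
Proof. by move=> *; rewrite rowset_estar // eqxx moved_colsE. Qed.
Lemma est_hi i B : 1 <= i -> i < L ->
  rowset (estar i B) i.+1 = rowset B i.+1 :\: mvS (rowset B i.+1) (rowset B i).
Proof.
move=> *; rewrite rowset_estar // eqxx moved_colsE //.
by rewrite (_ : (i.+1 == i) = false) //; lia.
Qed.
Lemma est_oth i B r : 1 <= i -> i < L -> r != i -> r != i.+1 ->
  rowset (estar i B) r = rowset B r.
Proof. by move=> ? ? /negbTE H1 /negbTE H2; rewrite rowset_estar // H1 H2. Qed.

Arguments est_oth {i B r}.
Definition colB B i := col (rowset B i) (rowset B i.+1) (rowset B i.+2) (enum 'I_n).

Lemma tri1 i B : 1 <= i -> i < L -> colB (estar i B) i = F1 (colB B i).
Proof.
move=> i1 iL; rewrite /colB est_lo // est_hi // est_oth //; try lia.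
by rewrite -col_T1 ?enum_uniq.
Qed.

Lemma tri2 i B : 1 <= i -> i.+1 < L -> colB (estar i.+1 B) i = F2 (colB B i).
Proof.
move=> i1 iL; rewrite /colB est_lo // est_hi // (est_oth (r := i)) //; try lia.
by rewrite -col_T2 ?enum_uniq.
Qed.

Lemma colB_inj B B' i : colB B i = colB B' i ->
  [/\ rowset B i = rowset B' i, rowset B i.+1 = rowset B' i.+1 &
      rowset B i.+2 = rowset B' i.+2].
Proof. by move/col_inj. Qed.

Lemma part1 i B : 1 <= i -> i < L -> estar i (estar i B) = estar i B.
Proof.
move=> i1 iL.
have [E1 E2 _] := colB_inj (B := estar i (estar i B)) (B' := estar i B) (i := i)
   ltac:(by rewrite !tri1 // F11).
apply: conf_eq => r.
case: (r =P i) => [->|/eqP ri] //; case: (r =P i.+1) => [->|/eqP ri1] //.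
by rewrite !est_oth.
Qed.

Lemma part3 i B : 1 <= i -> i.+1 < L ->
  estar i (estar i.+1 (estar i B)) = estar i.+1 (estar i (estar i.+1 B)).
Proof.
move=> i1 iL.
have [E1 E2 E3] := colB_inj (B := estar i (estar i.+1 (estar i B)))
   (B' := estar i.+1 (estar i (estar i.+1 B))) (i := i)
   ltac:(rewrite tri1 ?tri2 ?tri1 ?tri2 ?tri1 ?tri2 //; try lia;
         by case: (braid_aux (colB B i))).
apply: conf_eq => r.
case: (r =P i) => [->|/eqP ri] //; case: (r =P i.+1) => [->|/eqP ri1] //.
case: (r =P i.+2) => [->|/eqP ri2] //.
by rewrite !est_oth //; lia.
Qed.

Lemma part2 i j B : 1 <= i -> i < L -> 1 <= j -> j < L ->
  (1 < i - j) || (1 < j - i) -> estar i (estar j B) = estar j (estar i B).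
Proof.
move=> i1 iL j1 jL hij.
have Mi : mvS (rowset (estar j B) i.+1) (rowset (estar j B) i) =
          mvS (rowset B i.+1) (rowset B i).
  by rewrite !(est_oth (i := j)) //; lia.
have Mj : mvS (rowset (estar i B) j.+1) (rowset (estar i B) j) =
          mvS (rowset B j.+1) (rowset B j).
  by rewrite !(est_oth (i := i)) //; lia.
apply: conf_eq => r.
case: (r =P i) => [->|/eqP ri].
  rewrite est_lo // Mi (est_oth (i := j)) // ?(est_oth (i := j)) //; try lia.
  by rewrite est_lo.
case: (r =P i.+1) => [->|/eqP ri1].
  rewrite est_hi // Mi (est_oth (i := j)) // ?(est_oth (i := j)) //; try lia.
  by rewrite est_hi.
case: (r =P j) => [->|/eqP rj].
  rewrite [LHS](est_oth (i := i)); try lia.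
  rewrite est_lo // est_lo // Mj (est_oth (i := i)) //; lia.
case: (r =P j.+1) => [->|/eqP rj1].
  rewrite [LHS](est_oth (i := i)); try lia.
  rewrite est_hi // est_hi // Mj (est_oth (i := i)) //; lia.
by rewrite !est_oth.
Qed.
End Main.

Theorem theorem4p6 (L n : nat) (hL : 0 < L) (hn : 0 < n) :
  (forall i, 1 <= i <= L - 1 ->
     forall B : ballConf L n, estar i (estar i B) = estar i B) /\
  (forall i j, 1 <= i <= L - 1 -> 1 <= j <= L - 1 ->
     (1 < i - j) || (1 < j - i) ->
     forall B : ballConf L n, estar i (estar j B) = estar j (estar i B)) /\
  (forall i, 1 <= i <= L - 2 ->
     forall B : ballConf L n,
       estar i (estar i.+1 (estar i B)) = estar i.+1 (estar i (estar i.+1 B))).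
Proof.
split; [|split].
- move=> i /andP[i1 iL] B; apply: part1; lia.
- move=> i j /andP[i1 iL] /andP[j1 jL] h B; apply: part2 => //; lia.
- move=> i /andP[i1 iL] B; apply: part3; lia.
Qed.
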